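(* Let $\mathcal{F}$ be an $N$-dimensional commutative algebra with basis $e_1,\dots,e_N$ and structure constants $a^k_{ij}$, such that $e_1$ is a unity element and $\mathcal{F}$ carries a non-degenerate symmetric inner product $\langle\,,\rangle$ with components $\eta_{ij}$ satisfying the Frobenius condition $\langle a\circ b,c\rangle=\langle a,b\circ c\rangle$. Let $h^{(3)}=\frac{1}{6}a_{ijk}u^iu^ju^k$ and $h^{(4)}=a^i_{jk}u^ju^k\,\partial h^{(3)}/\partial u^i$. Then $h^{(4)}$ is a conserved density if and only if $\mathcal{F}$ is a Jordan algebra.
   Context: Summation over repeated indices is understood; indices are raised and lowered with $\eta_{ij}$ and its inverse, so $a_{ijk}=\eta_{ir}a^r_{jk}$ (totally symmetric by the Frobenius condition). A conserved density is a function $h(u^1,\dots,u^N)$ satisfying, for all $k,p$, $a^i_{jk}u^j\,\partial^2 h/\partial u^i\partial u^p=a^i_{jp}u^j\,\partial^2 h/\partial u^i\partial u^k$. A commutative algebra is Jordan if $(x\circ y)\circ(x\circ x)=x\circ(y\circ(x\circ x))$ for all $x,y$. *)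

(* Defs.v *)
From HB Require Import structures.
From mathcomp Require Import all_boot all_order all_algebra.
From mathcomp Require Import mpoly.
Set Implicit Arguments. Unset Strict Implicit. Unset Printing Implicit Defensive.
Import Order.TTheory GRing.Theory.
Local Open Scope ring_scope.

(* Structure constants: a k i j = a^k_{ij}, i.e. e_i o e_j = sum_k a^k_{ij} e_k.
   Vectors are row vectors of components x = x^i e_i. *)
Definition fmul (R : ringType) (N : nat) (a : 'I_N -> 'I_N -> 'I_N -> R)
  (x y : 'rV[R]_N) : 'rV[R]_N :=
  \row_k \sum_(i < N) \sum_(j < N) a k i j * x 0 i * y 0 j.

Definition fcommutative (R : ringType) (N : nat) (a : 'I_N -> 'I_N -> 'I_N -> R) :=
  forall k i j, a k i j = a k j i.

Definition is_unity (R : ringType) (N : nat) (a : 'I_N -> 'I_N -> 'I_N -> R) (u : 'I_N) :=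
  forall k j, a k u j = (k == j)%:R.

Definition frobenius (R : ringType) (N : nat) (a : 'I_N -> 'I_N -> 'I_N -> R)
  (eta : 'M[R]_N) :=
  forall i j l, \sum_(r < N) a r i j * eta r l = \sum_(r < N) eta i r * a r j l.

Definition jordan (R : ringType) (N : nat) (a : 'I_N -> 'I_N -> 'I_N -> R) :=
  forall x y : 'rV[R]_N,
    fmul a (fmul a x y) (fmul a x x) = fmul a x (fmul a y (fmul a x x)).

Definition alow (R : ringType) (N : nat) (a : 'I_N -> 'I_N -> 'I_N -> R)
  (eta : 'M[R]_N) (i j k : 'I_N) : R := \sum_(r < N) eta i r * a r j k.

Definition h3 (R : fieldType) (N : nat) (a : 'I_N -> 'I_N -> 'I_N -> R)
  (eta : 'M[R]_N) : {mpoly R[N]} :=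
  (6%:R)^-1 *: \sum_(i < N) \sum_(j < N) \sum_(k < N)
     (alow a eta i j k *: ('X_i * 'X_j * 'X_k)).

Definition h4 (R : fieldType) (N : nat) (a : 'I_N -> 'I_N -> 'I_N -> R)
  (eta : 'M[R]_N) : {mpoly R[N]} :=
  \sum_(i < N) \sum_(j < N) \sum_(k < N)
     (a i j k *: ('X_j * 'X_k * mderiv i (h3 a eta))).

Definition conserved_density (R : fieldType) (N : nat)
  (a : 'I_N -> 'I_N -> 'I_N -> R) (h : {mpoly R[N]}) :=
  forall k p : 'I_N,
    \sum_(i < N) \sum_(j < N) (a i j k *: ('X_j * mderiv p (mderiv i h)))
    = \sum_(i < N) \sum_(j < N) (a i j p *: ('X_j * mderiv k (mderiv i h))).

(* Main.v *)
Require Import Defs.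
From HB Require Import structures.
From mathcomp Require Import all_boot all_order all_algebra.
From mathcomp Require Import mpoly.
From mathcomp Require Import ring.
Import Order.TTheory GRing.Theory.
Local Open Scope ring_scope.
Set Implicit Arguments. Unset Strict Implicit.

Section Gen.
Variables (S : comRingType) (N : nat).
Implicit Types (c : 'I_N -> 'I_N -> 'I_N -> S) (x y z : 'rV[S]_N) (E : 'M[S]_N).

Definition ev (i : 'I_N) : 'rV[S]_N := delta_mx 0 i.
Definition pair E x y : S := \sum_(i < N) \sum_(j < N) x 0 i * E i j * y 0 j.

Lemma fmulDl c x1 x2 y : fmul c (x1 + x2) y = fmul c x1 y + fmul c x2 y.
Proof.
apply/rowP=> k; rewrite !mxE -big_split; apply: eq_bigr=> i _.
rewrite -big_split; apply: eq_bigr=> j _; rewrite !mxE /=. ring.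
Qed.

Lemma fmulDr c x y1 y2 : fmul c x (y1 + y2) = fmul c x y1 + fmul c x y2.
Proof.
apply/rowP=> k; rewrite !mxE -big_split; apply: eq_bigr=> i _.
rewrite -big_split; apply: eq_bigr=> j _; rewrite !mxE /=. ring.
Qed.

Lemma fmulZl c s x y : fmul c (s *: x) y = s *: fmul c x y.
Proof.
apply/rowP=> k; rewrite !mxE big_distrr; apply: eq_bigr=> i _.
rewrite big_distrr; apply: eq_bigr=> j _; rewrite !mxE /=; ring.
Qed.

Lemma fmulZr c s x y : fmul c x (s *: y) = s *: fmul c x y.
Proof.
apply/rowP=> k; rewrite !mxE big_distrr; apply: eq_bigr=> i _.
rewrite big_distrr; apply: eq_bigr=> j _; rewrite !mxE /=; ring.
Qed.

Lemma fmul0l c y : fmul c 0 y = 0.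
Proof.
apply/rowP=> k; rewrite !mxE big1 // => i _; rewrite big1 // => j _; rewrite !mxE /=; ring.
Qed.

Lemma fmul0r c x : fmul c x 0 = 0.
Proof.
apply/rowP=> k; rewrite !mxE big1 // => i _; rewrite big1 // => j _; rewrite !mxE /=; ring.
Qed.

Lemma fmul_suml c (I : Type) (r : seq I) (P : pred I) F y :
  fmul c (\sum_(i <- r | P i) F i) y = \sum_(i <- r | P i) fmul c (F i) y.
Proof.
apply: (big_morph (fun x => fmul c x y)) => [??|]; [exact: fmulDl | exact: fmul0l].
Qed.

Lemma fmul_sumr c (I : Type) (r : seq I) (P : pred I) F x :
  fmul c x (\sum_(i <- r | P i) F i) = \sum_(i <- r | P i) fmul c x (F i).
Proof.
apply: (big_morph (fun y => fmul c x y)) => [??|]; [exact: fmulDr | exact: fmul0r].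
Qed.

Lemma fmulNl c x y : fmul c (- x) y = - fmul c x y.
Proof. by rewrite -scaleN1r fmulZl scaleN1r. Qed.
Lemma fmulNr c x y : fmul c x (- y) = - fmul c x y.
Proof. by rewrite -scaleN1r fmulZr scaleN1r. Qed.
Lemma fmulBl c x1 x2 y : fmul c (x1 - x2) y = fmul c x1 y - fmul c x2 y.
Proof. by rewrite fmulDl fmulNl. Qed.
Lemma fmulBr c x y1 y2 : fmul c x (y1 - y2) = fmul c x y1 - fmul c x y2.
Proof. by rewrite fmulDr fmulNr. Qed.

Lemma fmulC c x y : fcommutative c -> fmul c x y = fmul c y x.
Proof.
move=> cC; apply/rowP=> k; rewrite !mxE exchange_big; apply: eq_bigr=> i _.
apply: eq_bigr=> j _; rewrite cC; ring.
Qed.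

Lemma pairDl E x1 x2 y : pair E (x1 + x2) y = pair E x1 y + pair E x2 y.
Proof.
rewrite /pair -big_split; apply: eq_bigr=> i _.
rewrite -big_split; apply: eq_bigr=> j _; rewrite !mxE /=. ring.
Qed.

Lemma pairDr E x y1 y2 : pair E x (y1 + y2) = pair E x y1 + pair E x y2.
Proof.
rewrite /pair -big_split; apply: eq_bigr=> i _.
rewrite -big_split; apply: eq_bigr=> j _; rewrite !mxE /=. ring.
Qed.

Lemma pairZl E s x y : pair E (s *: x) y = s * pair E x y.
Proof.
rewrite /pair big_distrr; apply: eq_bigr=> i _.
rewrite big_distrr; apply: eq_bigr=> j _; rewrite !mxE /=; ring.
Qed.

Lemma pairZr E s x y : pair E x (s *: y) = s * pair E x y.
Proof.
rewrite /pair big_distrr; apply: eq_bigr=> i _.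
rewrite big_distrr; apply: eq_bigr=> j _; rewrite !mxE /=; ring.
Qed.

Lemma pair0l E y : pair E 0 y = 0.
Proof. by rewrite /pair big1 // => i _; rewrite big1 // => j _; rewrite !mxE /=; ring. Qed.
Lemma pair0r E x : pair E x 0 = 0.
Proof. by rewrite /pair big1 // => i _; rewrite big1 // => j _; rewrite !mxE /=; ring. Qed.

Lemma pair_suml E (I : Type) (r : seq I) (P : pred I) F y :
  pair E (\sum_(i <- r | P i) F i) y = \sum_(i <- r | P i) pair E (F i) y.
Proof.
apply: (big_morph (fun x => pair E x y)) => [??|]; [exact: pairDl | exact: pair0l].
Qed.

Lemma pair_sumr E (I : Type) (r : seq I) (P : pred I) F x :
  pair E x (\sum_(i <- r | P i) F i) = \sum_(i <- r | P i) pair E x (F i).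
Proof.
apply: (big_morph (fun y => pair E x y)) => [??|]; [exact: pairDr | exact: pair0r].
Qed.

Lemma pairNl E x y : pair E (- x) y = - pair E x y.
Proof. by rewrite -scaleN1r pairZl mulN1r. Qed.
Lemma pairNr E x y : pair E x (- y) = - pair E x y.
Proof. by rewrite -scaleN1r pairZr mulN1r. Qed.
Lemma pairBl E x1 x2 y : pair E (x1 - x2) y = pair E x1 y - pair E x2 y.
Proof. by rewrite pairDl pairNl. Qed.
Lemma pairBr E x y1 y2 : pair E x (y1 - y2) = pair E x y1 - pair E x y2.
Proof. by rewrite pairDr pairNr. Qed.

Lemma pairC E x y : E^T = E -> pair E x y = pair E y x.
Proof.
move=> ET; rewrite /pair exchange_big; apply: eq_bigr=> i _.
apply: eq_bigr=> j _.
have -> : E j i = E i j by rewrite -{1}ET mxE.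
ring.
Qed.

Lemma sum_ev (F : 'I_N -> S) i : \sum_(j < N) F j * ev i 0 j = F i.
Proof.
rewrite (bigD1 i) //= big1 => [|j ji]; rewrite !mxE ?eqxx ?(negbTE ji) /=; ring.
Qed.

Lemma sum_ev' (F : 'I_N -> S) i : \sum_(j < N) ev i 0 j * F j = F i.
Proof. by rewrite -(sum_ev F i); apply: eq_bigr=> j _; ring. Qed.

Lemma fmul_ev c i j k : fmul c (ev i) (ev j) 0 k = c k i j.
Proof.
rewrite mxE; under eq_bigr do rewrite sum_ev.
by rewrite sum_ev.
Qed.

Lemma pair_evr E x l : pair E x (ev l) = \sum_(r < N) x 0 r * E r l.
Proof. by apply: eq_bigr=> r _; rewrite sum_ev. Qed.

Lemma pair_evl E i y : pair E (ev i) y = \sum_(r < N) E i r * y 0 r.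
Proof.
rewrite /pair exchange_big /=; apply: eq_bigr=> r _.
under eq_bigr do rewrite mulrAC -mulrA.
by rewrite sum_ev' mulrC.
Qed.

Lemma rowE x : x = \sum_(i < N) x 0 i *: ev i.
Proof. exact: row_sum_delta. Qed.

Lemma pair_frob c E x y z : frobenius c E ->
  pair E (fmul c x y) z = pair E x (fmul c y z).
Proof.
move=> fr.
rewrite {1}(rowE x) {1}(rowE y) {1}(rowE z).
rewrite [in RHS](rowE x) [in RHS](rowE y) [in RHS](rowE z).
rewrite fmul_suml pair_suml pair_suml; apply: eq_bigr=> i _.
rewrite fmulZl pairZl pairZl; congr (_ * _).
rewrite fmul_sumr pair_suml fmul_suml pair_sumr; apply: eq_bigr=> j _.
rewrite fmulZr pairZl fmulZl pairZr; congr (_ * _).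
rewrite pair_sumr fmul_sumr pair_sumr; apply: eq_bigr=> l _.
rewrite pairZr fmulZr pairZr; congr (_ * _).
rewrite pair_evr pair_evl.
under eq_bigr do rewrite fmul_ev.
under [RHS]eq_bigr do rewrite fmul_ev.
exact: fr.
Qed.


Definition Tj c (p : 'I_N) x1 x2 x3 : 'rV[S]_N :=
  fmul c (fmul c x1 (ev p)) (fmul c x2 x3) - fmul c x1 (fmul c (ev p) (fmul c x2 x3)).

Lemma TjL1 c p s x x' y z : Tj c p (s *: x + x') y z = s *: Tj c p x y z + Tj c p x' y z.
Proof.
rewrite /Tj !(fmulDl, fmulDr, fmulZl, fmulZr) scalerBr; apply/rowP=> r; rewrite !mxE /=; ring.
Qed.
Lemma TjL2 c p s x x' y z : Tj c p y (s *: x + x') z = s *: Tj c p y x z + Tj c p y x' z.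
Proof.
rewrite /Tj !(fmulDl, fmulDr, fmulZl, fmulZr) scalerBr; apply/rowP=> r; rewrite !mxE /=; ring.
Qed.
Lemma TjL3 c p s x x' y z : Tj c p y z (s *: x + x') = s *: Tj c p y z x + Tj c p y z x'.
Proof.
rewrite /Tj !(fmulDl, fmulDr, fmulZl, fmulZr) scalerBr; apply/rowP=> r; rewrite !mxE /=; ring.
Qed.

Section Multi.
Variable T : 'rV[S]_N -> 'rV[S]_N -> 'rV[S]_N -> 'rV[S]_N.
Hypothesis H1 : forall s x x' y z, T (s *: x + x') y z = s *: T x y z + T x' y z.
Hypothesis H2 : forall s x x' y z, T y (s *: x + x') z = s *: T y x z + T y x' z.
Hypothesis H3 : forall s x x' y z, T y z (s *: x + x') = s *: T y z x + T y z x'.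

Lemma TD1 x x' y z : T (x + x') y z = T x y z + T x' y z.
Proof. by rewrite -[x in LHS]scale1r H1 scale1r. Qed.
Lemma TD2 x x' y z : T y (x + x') z = T y x z + T y x' z.
Proof. by rewrite -[x in LHS]scale1r H2 scale1r. Qed.
Lemma TD3 x x' y z : T y z (x + x') = T y z x + T y z x'.
Proof. by rewrite -[x in LHS]scale1r H3 scale1r. Qed.
Lemma T01 y z : T 0 y z = 0.
Proof. by have := TD1 0 0 y z; rewrite addr0 => /eqP; rewrite -subr_eq subrr eq_sym => /eqP. Qed.
Lemma T02 y z : T y 0 z = 0.
Proof. by have := TD2 0 0 y z; rewrite addr0 => /eqP; rewrite -subr_eq subrr eq_sym => /eqP. Qed.
Lemma T03 y z : T y z 0 = 0.
Proof. by have := TD3 0 0 y z; rewrite addr0 => /eqP; rewrite -subr_eq subrr eq_sym => /eqP. Qed.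
Lemma TZ1 s x y z : T (s *: x) y z = s *: T x y z.
Proof. by rewrite -[s *: x]addr0 H1 T01 addr0. Qed.
Lemma TZ2 s x y z : T y (s *: x) z = s *: T y x z.
Proof. by rewrite -[s *: x]addr0 H2 T02 addr0. Qed.
Lemma TZ3 s x y z : T y z (s *: x) = s *: T y z x.
Proof. by rewrite -[s *: x]addr0 H3 T03 addr0. Qed.
Lemma Tsum1 (I : Type) (r : seq I) (P : pred I) F y z :
  T (\sum_(i <- r | P i) F i) y z = \sum_(i <- r | P i) T (F i) y z.
Proof. apply: (big_morph (fun x => T x y z)) => [??|]; [exact: TD1 | exact: T01]. Qed.
Lemma Tsum2 (I : Type) (r : seq I) (P : pred I) F y z :
  T y (\sum_(i <- r | P i) F i) z = \sum_(i <- r | P i) T y (F i) z.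
Proof. apply: (big_morph (fun x => T y x z)) => [??|]; [exact: TD2 | exact: T02]. Qed.
Lemma Tsum3 (I : Type) (r : seq I) (P : pred I) F y z :
  T y z (\sum_(i <- r | P i) F i) = \sum_(i <- r | P i) T y z (F i).
Proof. apply: (big_morph (fun x => T y z x)) => [??|]; [exact: TD3 | exact: T03]. Qed.

Lemma T_expand u : T u u u =
  \sum_(a < N) \sum_(b < N) \sum_(c < N) (u 0 a * u 0 b * u 0 c) *: T (ev a) (ev b) (ev c).
Proof.
rewrite {1 2 3}(rowE u) Tsum1; apply: eq_bigr=> a _.
rewrite TZ1 Tsum2 scaler_sumr; apply: eq_bigr=> b _.
rewrite TZ2 Tsum3 !scaler_sumr; apply: eq_bigr=> c _.
by rewrite TZ3 !scalerA; congr (_ *: _); ring.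
Qed.

Lemma T_polar x y z : (forall w, T w w w = 0) ->
  T x y z + T x z y + T y x z + T y z x + T z x y + T z y x = 0.
Proof.
move=> Hw.
have key : T x y z + T x z y + T y x z + T y z x + T z x y + T z y x =
  T (x + y + z) (x + y + z) (x + y + z) - T (x + y) (x + y) (x + y)
  - T (x + z) (x + z) (x + z) - T (y + z) (y + z) (y + z)
  + T x x x + T y y y + T z z z.
  rewrite !TD1 !TD2 !TD3; apply/rowP=> r; rewrite !mxE /=; ring.
by rewrite key !Hw; apply/rowP=> r; rewrite !mxE /=; ring.
Qed.
End Multi.

End Gen.

Lemma map_fmul (S S' : comRingType) N (f : {rmorphism S -> S'}) c c' (x y : 'rV[S]_N) :
  (forall k i j, c' k i j = f (c k i j)) ->
  map_mx f (fmul c x y) = fmul c' (map_mx f x) (map_mx f y).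
Proof.
move=> hc; apply/rowP=> k; rewrite !mxE rmorph_sum; apply: eq_bigr=> i _.
rewrite rmorph_sum; apply: eq_bigr=> j _; rewrite !rmorphM !mxE hc //.
Qed.

Lemma map_pair (S S' : comRingType) N (f : {rmorphism S -> S'}) E (x y : 'rV[S]_N) :
  f (pair E x y) = pair (map_mx f E) (map_mx f x) (map_mx f y).
Proof.
rewrite /pair rmorph_sum; apply: eq_bigr=> i _.
rewrite rmorph_sum; apply: eq_bigr=> j _; rewrite !rmorphM !mxE //.
Qed.

Lemma map_ev (S S' : comRingType) N (f : {rmorphism S -> S'}) (i : 'I_N) :
  map_mx f (ev S i) = ev S' i.
Proof. exact: map_delta_mx. Qed.

Lemma map_Tj (S S' : comRingType) N (f : {rmorphism S -> S'}) c c' p (x y z : 'rV[S]_N) :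
  (forall k i j, c' k i j = f (c k i j)) ->
  map_mx f (Tj c p x y z) = Tj c' p (map_mx f x) (map_mx f y) (map_mx f z).
Proof.
move=> hc; rewrite /Tj map_mxB !(map_fmul _ _ hc) map_ev //.
Qed.

Section PhiSec.
Variables (S : comRingType) (N : nat) (c : 'I_N -> 'I_N -> 'I_N -> S) (E : 'M[S]_N)
  (e X Y : 'rV[S]_N).
Definition PhiG v :=
  pair E (fmul c v e + fmul c e v) Y
  + pair E (fmul c v X + fmul c X v) (fmul c e X + fmul c X e)
  + (pair E (fmul c e X + fmul c X e) (fmul c v X + fmul c X v)
  + pair E Y (fmul c v e + fmul c e v)).
Lemma PhiGD x y : PhiG (x + y) = PhiG x + PhiG y.
Proof. rewrite /PhiG !(fmulDl, fmulDr) !(pairDl, pairDr). ring. Qed.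
Lemma PhiGZ s x : PhiG (s *: x) = s * PhiG x.
Proof. rewrite /PhiG !(fmulZl, fmulZr) !(pairDl, pairDr) !(pairZl, pairZr). ring. Qed.
Lemma PhiG_simp (cC : fcommutative c) (ET : E^T = E) W :
  PhiG W = 4%:R * pair E (fmul c W e) Y + 8%:R * pair E (fmul c W X) (fmul c e X).
Proof.
rewrite /PhiG (fmulC e W cC) (fmulC X W cC) (fmulC X e cC) (pairC Y _ ET).
rewrite (pairC (fmul c e X + fmul c e X) _ ET) !pairDl !pairDr; ring.
Qed.
End PhiSec.

Lemma key_generic (S : comRingType) N (c : 'I_N -> 'I_N -> 'I_N -> S) (E : 'M[S]_N)
  (X : 'rV[S]_N) k p :
  fcommutative c -> E^T = E -> frobenius c E ->
  PhiG c E (ev S p) X (fmul c X X) (fmul c X (ev S k))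
  - PhiG c E (ev S k) X (fmul c X X) (fmul c X (ev S p))
  = 4%:R * (- pair E (ev S k) (Tj c p X X X)).
Proof.
move=> cC ET fr; rewrite !(PhiG_simp _ _ _ cC ET).
set ek := ev S k; set ep := ev S p; set Y := fmul c X X.
have e1 : pair E (fmul c (fmul c X ek) ep) Y = pair E ek (fmul c X (fmul c ep Y)).
  by rewrite (pair_frob _ _ _ fr) (fmulC X ek cC) (pair_frob _ _ _ fr).
have e2 : pair E (fmul c (fmul c X ep) ek) Y = pair E ek (fmul c (fmul c X ep) Y).
  by rewrite (fmulC _ ek cC) (pair_frob _ _ _ fr).
have e3 : pair E (fmul c (fmul c X ek) X) (fmul c ep X)
        = pair E (fmul c (fmul c X ep) X) (fmul c ek X).
  rewrite (pair_frob _ _ _ fr) [RHS](pairC _ _ ET) (fmulC ek X cC).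
  by rewrite [fmul c (fmul c X ep) X](fmulC _ X cC) (fmulC X ep cC).
rewrite e1 e2 e3 /Tj pairBr; ring.
Qed.

Section Sym3.
Variables (S : comRingType) (N : nat) (x : 'I_N -> S).
Definition S3 (F : 'I_N -> 'I_N -> 'I_N -> 'rV[S]_N) :=
  \sum_(a < N) \sum_(b < N) \sum_(c < N) (x a * x b * x c) *: F a b c.

Lemma sw12 F : S3 F = S3 (fun a b c => F b a c).
Proof.
rewrite /S3 exchange_big; apply: eq_bigr=> a _; apply: eq_bigr=> b _.
apply: eq_bigr=> c _; congr (_ *: _); ring.
Qed.

Lemma sw23 F : S3 F = S3 (fun a b c => F a c b).
Proof.
apply: eq_bigr=> a _; rewrite exchange_big; apply: eq_bigr=> b _.
apply: eq_bigr=> c _; congr (_ *: _); ring.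
Qed.

Lemma sym3_zero (G : 'I_N -> 'I_N -> 'I_N -> 'rV[S]_N) (u : S) :
  u * 6%:R = 1 ->
  (forall a b c, G a b c + G a c b + G b a c + G b c a + G c a b + G c b a = 0) ->
  S3 G = 0.
Proof.
move=> hu hG.
have Z2 : S3 (fun a b c => G a c b) = S3 G by rewrite -sw23.
have Z3 : S3 (fun a b c => G b a c) = S3 G by rewrite -sw12.
have Z4 : S3 (fun a b c => G b c a) = S3 G.
  by rewrite -Z2 (sw12 (fun a b c => G a c b)).
have Z5 : S3 (fun a b c => G c a b) = S3 G.
  by rewrite -Z3 (sw23 (fun a b c => G b a c)).
have Z6 : S3 (fun a b c => G c b a) = S3 G.
  by rewrite -Z5 (sw12 (fun a b c => G c a b)).
have tot : S3 G + S3 (fun a b c => G a c b) + S3 (fun a b c => G b a c)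
  + S3 (fun a b c => G b c a) + S3 (fun a b c => G c a b) + S3 (fun a b c => G c b a) = 0.
  rewrite /S3 -!big_split big1 // => a _; rewrite -!big_split big1 // => b _.
  rewrite -!big_split big1 // => c _; rewrite /= -!scalerDr.
  by rewrite hG scaler0.
move: tot; rewrite Z2 Z3 Z4 Z5 Z6; set Z := S3 G => tot.
have -> : Z = (u * 6%:R) *: Z by rewrite hu scale1r.
rewrite -scalerA.
have -> : (6%:R : S) *: Z = Z + Z + Z + Z + Z + Z.
  by rewrite scaler_nat !mulrS mulr0n addr0 !addrA.
by rewrite tot scaler0.
Qed.
End Sym3.

Section Poly.
Variables (R : fieldType) (N : nat) (a : 'I_N -> 'I_N -> 'I_N -> R) (eta : 'M[R]_N).
Local Notation S := {mpoly R[N]}.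
Definition A : 'I_N -> 'I_N -> 'I_N -> S := fun k i j => (a k i j)%:MP.
Definition Em : 'M[S]_N := \matrix_(i, j) (eta i j)%:MP.
Definition Xv : 'rV[S]_N := \row_i 'X_i.
Definition dv p (x : 'rV[S]_N) := map_mx (mderiv p) x.

Lemma mderivXX (p i : 'I_N) : mderiv p ('X_i : S) = (i == p)%:R.
Proof.
rewrite mderivX mnm1E; case: eqP => [->|_]; last by rewrite scale0r.
have -> : (U_(p) - U_(p) = 0)%MM by apply/mnmP=> j; rewrite mnmBE mnm0E subnn.
by rewrite mpolyX0 scale1r.
Qed.

Lemma dv_X p : dv p Xv = ev S p.
Proof. by apply/rowP=> i; rewrite !mxE mderivXX eqxx. Qed.

Lemma mderiv_nat p k : mderiv p (k%:R : S) = 0.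
Proof. by rewrite -mpolyC_nat mderivC. Qed.

Lemma dv_ev p i : dv p (ev S i) = 0.
Proof. by apply/rowP=> j; rewrite !mxE mderiv_nat. Qed.

Lemma dvD p x y : dv p (x + y) = dv p x + dv p y.
Proof. by apply/rowP=> j; rewrite !mxE mderivD. Qed.

Lemma dv_fmul p x y : dv p (fmul A x y) = fmul A (dv p x) y + fmul A x (dv p y).
Proof.
apply/rowP=> k; rewrite !mxE raddf_sum -big_split; apply: eq_bigr=> i _.
rewrite raddf_sum -big_split; apply: eq_bigr=> j _.
rewrite /= !mderivM /A mderivC !mxE /=; ring.
Qed.

Lemma d_pair p x y : mderiv p (pair Em x y) = pair Em (dv p x) y + pair Em x (dv p y).
Proof.
rewrite /pair raddf_sum -big_split; apply: eq_bigr=> i _.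
rewrite raddf_sum -big_split; apply: eq_bigr=> j _.
rewrite /= !mderivM !mxE mderivC /=; ring.
Qed.

Lemma h3E : h3 a eta = (6%:R)^-1 *: pair Em Xv (fmul A Xv Xv).
Proof.
rewrite /h3; congr (_ *: _); rewrite /pair; apply: eq_bigr=> i _.
transitivity (\sum_(r < N) \sum_(j < N) \sum_(k < N)
                 (eta i r * a r j k) *: ('X_i * 'X_j * 'X_k : S)).
  under eq_bigr do under eq_bigr do rewrite /alow scaler_suml.
  under eq_bigr do rewrite exchange_big.
  by rewrite exchange_big.
apply: eq_bigr=> r _; rewrite !mxE big_distrr; apply: eq_bigr=> j _.
rewrite big_distrr; apply: eq_bigr=> k _; rewrite !mxE /A -mul_mpolyC mpolyCM /=; ring.
Qed.

Hypothesis aC : fcommutative a.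
Hypothesis etaT : eta^T = eta.
Hypothesis fr : frobenius a eta.

Lemma AC : fcommutative A.
Proof. by move=> k i j; rewrite /A aC. Qed.
Lemma EmT : Em^T = Em.
Proof. by apply/matrixP=> i j; rewrite !mxE -{1}etaT mxE. Qed.
Lemma frA : frobenius A Em.
Proof.
move=> i j l.
under eq_bigr do rewrite mxE /A -mpolyCM.
under [RHS]eq_bigr do rewrite mxE /A -mpolyCM.
by rewrite -!rmorph_sum /= fr.
Qed.

Local Notation Y := (fmul A Xv Xv).

Lemma pair_expand E v w : pair E v w = \sum_(i < N) v 0 i * pair E (ev S i) w.
Proof. by rewrite {1}(rowE v) pair_suml; apply: eq_bigr=> i _; rewrite pairZl. Qed.

Lemma dh3 i : mderiv i (h3 a eta) = (6%:R)^-1 *: (3%:R * pair Em (ev S i) Y).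
Proof.
rewrite h3E mderivZ d_pair dv_X dv_fmul dv_X pairDr; congr (_ *: _).
rewrite (fmulC Xv (ev S i) AC) (pairC Xv _ EmT) (pair_frob _ _ _ frA).
ring.
Qed.

Definition kap : R := (6%:R)^-1 * 3%:R.

Lemma h4E : h4 a eta = kap%:MP * pair Em Y Y.
Proof.
rewrite /h4 [pair _ _ _]pair_expand big_distrr; apply: eq_bigr=> i _.
rewrite dh3.
transitivity (Y 0 i * ((6%:R)^-1 *: (3%:R * pair Em (ev S i) Y))).
  rewrite mxE big_distrl; apply: eq_bigr=> j _.
  rewrite big_distrl; apply: eq_bigr=> k _.
  by rewrite /A !mxE -!mul_mpolyC /=; ring.
rewrite /= /kap -mul_mpolyC mpolyCM mpolyC_nat; ring.
Qed.

Definition Phi p v := PhiG A Em (ev S p) Xv Y v.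

Lemma hess p i : mderiv p (mderiv i (h4 a eta)) = kap%:MP * Phi p (ev S i).
Proof.
rewrite h4E !mderiv_mulC; congr (_ * _).
rewrite d_pair !dv_fmul !dv_X mderivD !d_pair !dvD !dv_fmul !dv_X !dv_ev !fmul0l !fmul0r.
by rewrite add0r addr0 /Phi /PhiG.
Qed.


Lemma lin_expand (F : 'rV[S]_N -> S) :
  (forall x y, F (x + y) = F x + F y) -> (forall s x, F (s *: x) = s * F x) ->
  forall W : 'rV[S]_N, \sum_(i < N) W 0 i * F (ev S i) = F W.
Proof.
move=> FD FZ W.
have F0 : F 0 = 0 by rewrite -(scale0r 0) FZ mul0r.
rewrite [in RHS](rowE W) (big_morph F FD F0); apply: eq_bigr=> i _; by rewrite FZ.
Qed.


Lemma LHS_E k p :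
  \sum_(i < N) \sum_(j < N) (a i j k *: ('X_j * mderiv p (mderiv i (h4 a eta))))
  = kap%:MP * Phi p (fmul A Xv (ev S k)).
Proof.
rewrite -lin_expand; last first.
- by move=> s x; rewrite /Phi PhiGZ.
- by move=> x y; rewrite /Phi PhiGD.
rewrite big_distrr; apply: eq_bigr=> i _.
rewrite /= hess mulrCA [fmul _ _ _ 0 i]mxE.
under [X in _ = X * _]eq_bigr do rewrite sum_ev.
rewrite big_distrl; apply: eq_bigr=> j _.

by rewrite /A !mxE -!mul_mpolyC /=; ring.
Qed.

Lemma keyE k p :
  \sum_(i < N) \sum_(j < N) (a i j k *: ('X_j * mderiv p (mderiv i (h4 a eta))))
  - \sum_(i < N) \sum_(j < N) (a i j p *: ('X_j * mderiv k (mderiv i (h4 a eta))))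
  = (kap * 4%:R)%:MP * (- pair Em (ev S k) (Tj A p Xv Xv Xv)).
Proof.
rewrite !LHS_E -mulrBr /Phi key_generic ?mpolyCM ?mpolyC_nat ?mulrA //.
exact: AC. exact: EmT. exact: frA.
Qed.

Lemma Jpoly (J : jordan a) (h6 : (6%:R : R) != 0) p : Tj A p Xv Xv Xv = 0.
Proof.
rewrite (T_expand (TjL1 A p) (TjL2 A p) (TjL3 A p) Xv).
pose G := fun a' b' c' =>
  map_mx (@mpolyC N R) (Tj a p (ev R a') (ev R b') (ev R c')).
transitivity (S3 (fun i => 'X_i : S) G).
  apply: eq_bigr=> a' _; apply: eq_bigr=> b' _; apply: eq_bigr=> c' _.
  rewrite !mxE /G (map_Tj (f := @mpolyC N R) (c' := A)) ?map_ev //.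
apply: (@sym3_zero S N (fun i => 'X_i) G ((6%:R^-1)%:MP)).
  by rewrite -mpolyC_nat -mpolyCM mulVf // mpolyC1.
move=> a' b' c'; rewrite /G -!map_mxD.
rewrite (T_polar (TjL1 a p) (TjL2 a p) (TjL3 a p)) ?map_mx0 //.
by move=> w; rewrite /Tj J subrr.
Qed.

Lemma Jeval (etaU : eta \in unitmx)
  (H : forall k p, pair Em (ev S k) (Tj A p Xv Xv Xv) = 0) : jordan a.
Proof.
move=> x y.
pose v := fun i => x 0 i.
have Hp : forall p, Tj a p x x x = 0.
  move=> p.
  have hk : forall k, pair eta (ev R k) (Tj a p x x x) = 0.
    move=> k; have := congr1 (meval v) (H k p).
    rewrite (map_pair (meval v)) (map_Tj (f := meval v) (c := A) (c' := a)); last first.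
      by move=> ? ? ?; rewrite /A /= mevalC.
    rewrite !map_ev meval0.
    have -> : map_mx (meval v) Em = eta by apply/matrixP=> i j; rewrite !mxE mevalC.
    by have -> : map_mx (meval v) Xv = x by apply/rowP=> i; rewrite !mxE mevalXU.
  have M0 : eta *m (Tj a p x x x)^T = 0.
    apply/matrixP=> k j; rewrite ord1 !mxE -[RHS](hk k) pair_evl.
    by apply: eq_bigr=> r _; rewrite !mxE.
  have := congr1 (mulmx (invmx eta)) M0; rewrite mulKmx // mulmx0.
  by move=> /(congr1 trmx); rewrite trmxK trmx0.
apply/eqP; rewrite -subr_eq0; apply/eqP.
transitivity (\sum_(p < N) y 0 p *: Tj a p x x x).
  rewrite /Tj {1 2}(rowE y) !(fmul_sumr, fmul_suml) -sumrB; apply: eq_bigr=> p _.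
  by rewrite !(fmulZl, fmulZr) scalerBr.
by rewrite big1 // => p _; rewrite Hp scaler0.
Qed.
End Poly.

Unset Implicit Arguments.

Theorem proposition2 (R : fieldType) (n : nat)
  (a : 'I_n.+1 -> 'I_n.+1 -> 'I_n.+1 -> R) (eta : 'M[R]_n.+1) :
  [pchar R] =i pred0 ->
  fcommutative a ->
  is_unity a ord0 ->
  eta^T = eta ->
  eta \in unitmx ->
  frobenius a eta ->
  (conserved_density a (h4 a eta) <-> jordan a).
Proof.
move=> hc aC _ etaT etaU fr.
have nz : forall m, (m%:R == 0 :> R) = (m == 0)%N by apply/pcharf0P.
have nzc : kap R * 4%:R != 0.
  by rewrite /kap !mulf_neq0 ?invr_eq0 ?nz.
split.
- move=> Hc; apply: (Jeval etaU) => k p.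
  have := keyE aC etaT fr k p; rewrite (Hc k p) subrr => /esym/eqP.
  by rewrite mulf_eq0 mpolyC_eq0 (negbTE nzc) /= oppr_eq0 => /eqP.
- move=> J k p; apply/eqP; rewrite -subr_eq0; apply/eqP.
  by rewrite keyE // Jpoly ?nz // pair0r oppr0 mulr0.
Qed.
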